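(* Let $H$ be an acyclic simple digraph, let $k$ be a positive integer, and let $T$ be a tournament with $|V(T)|\ge d_{\mathrm{eh}}\cdot 2^{|V(H)|}\sqrt{k}$. Then $T$ contains $k$ pairwise arc-disjoint subgraphs isomorphic to $H$.
   Context: A tournament is a simple digraph with exactly one arc between every pair of distinct vertices. $d_{\mathrm{eh}}$ denotes a fixed universal constant with the property that for all positive integers $q,k$, in a complete (undirected) graph on at least $d_{\mathrm{eh}}\cdot q\sqrt{k}$ vertices one can find $k$ pairwise edge-disjoint complete subgraphs, each on $q$ vertices (such a constant exists by results of Erdős and Hanani). *)

(* Defs.v *)
From HB Require Import structures.
From mathcomp Require Import all_boot all_order all_algebra.
From mathcomp Require Import reals.
Set Implicit Arguments. Unset Strict Implicit. Unset Printing Implicit Defensive.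
Import Order.TTheory GRing.Theory Num.Theory.
Local Open Scope ring_scope.

Definition acyclic_digraph (V : finType) (e : rel V) : Prop :=
  forall x y : V, e x y -> ~~ connect e y x.

Definition tournament (V : finType) (t : rel V) : Prop :=
  (forall x : V, ~~ t x x) /\ (forall x y : V, x != y -> t x y != t y x).

(* Erdős–Hanani property of the constant d: for all positive q, k, the complete
   graph on n >= d q sqrt(k) vertices (vertex set 'I_n) has k pairwise
   edge-disjoint complete subgraphs on q vertices (vertex sets S_i of size q,
   any two sharing at most one vertex, i.e. no common edge). *)
Definition erdos_hanani_const (R : realType) (d : R) : Prop :=
  forall q k : nat, (0 < q)%N -> (0 < k)%N ->
  forall n : nat, d * q%:R * Num.sqrt (k%:R) <= n%:R ->
  exists S : 'I_k -> {set 'I_n},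
    (forall i, #|S i| = q) /\
    (forall i j, i != j -> (#|S i :&: S j| <= 1)%N).

(* A copy of H in T: an injective map f : V(H) -> V(T) sending arcs to arcs; the
   copy's arc set is {(f x, f y) | h x y}. *)
Definition embeds (VH VT : finType) (h : rel VH) (t : rel VT) (f : VH -> VT) : Prop :=
  injective f /\ (forall x y, h x y -> t (f x) (f y)).

Definition arc_disjoint (VH VT : finType) (h : rel VH) (f g : VH -> VT) : Prop :=
  forall x y x' y', h x y -> h x' y' -> (f x, f y) <> (g x', g y').

(* Main.v *)
Require Import Defs.
From HB Require Import structures.
From mathcomp Require Import all_boot all_order all_algebra.
From mathcomp Require Import reals.
From mathcomp Require Import zify.
Import Order.TTheory GRing.Theory Num.Theory.

Section S.
Variables (VH : finType) (h : rel VH).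
Hypothesis hH : acyclic_digraph h.

Lemma h_irr x : ~~ h x x.
Proof. by apply/negP => hx; move: (hH _ _ hx); rewrite connect0. Qed.

Lemma source_ex (B : {set VH}) x1 : x1 \in B ->
  exists2 x0, x0 \in B & forall y, y \in B -> ~~ h y x0.
Proof.
move=> x1B.
case: (arg_minnP (fun x => #|[set y in B | connect h y x]|) x1B) => x0 x0B Hmin.
exists x0 => // y yB; apply/negP => hyx.
have := Hmin y yB.
suff : #|[set z in B | connect h z y]| < #|[set z in B | connect h z x0]|.
  by move=> lt; rewrite leqNgt lt.
apply: proper_card; apply/properP; split.
  apply/subsetP => z; rewrite !inE => /andP[-> cz] /=.
  exact: connect_trans cz (connect1 hyx).
exists x0; first by rewrite !inE connect0 andbT.
by rewrite !inE negb_and (hH _ _ hyx) orbT.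
Qed.

Lemma sink_ex (B : {set VH}) x1 : x1 \in B ->
  exists2 x0, x0 \in B & forall y, y \in B -> ~~ h x0 y.
Proof.
move=> x1B.
case: (arg_minnP (fun x => #|[set y in B | connect h x y]|) x1B) => x0 x0B Hmin.
exists x0 => // y yB; apply/negP => hyx.
have := Hmin y yB.
suff : #|[set z in B | connect h y z]| < #|[set z in B | connect h x0 z]|.
  by move=> lt; rewrite leqNgt lt.
apply: proper_card; apply/properP; split.
  apply/subsetP => z; rewrite !inE => /andP[-> cz] /=.
  exact: connect_trans (connect1 hyx) cz.
exists x0; first by rewrite !inE connect0 andbT.
by rewrite !inE negb_and (hH _ _ hyx) orbT.
Qed.
Variables (VT : finType) (t : rel VT).
Hypothesis hT : tournament t.

Lemma embed_in b : forall (B : {set VH}) (A : {set VT}), #|B| = b -> (2 ^ b <= #|A|)%N ->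
  exists f : VH -> VT, {in B &, injective f} /\ (forall x, x \in B -> f x \in A) /\
    (forall x y, x \in B -> y \in B -> h x y -> t (f x) (f y)).
Proof.
elim: b => [|b IH] B A cB cA.
  have /card_gt0P [v vA] : (0 < #|A|)%N by rewrite (leq_trans _ cA) ?expn_gt0.
  exists (fun=> v); split; last split => //.
  - by move=> x y; rewrite (cards0_eq cB) inE.
  - by move=> x y; rewrite (cards0_eq cB) inE.
have /card_gt0P [v vA] : (0 < #|A|)%N by rewrite (leq_trans _ cA) ?expn_gt0.
have /card_gt0P [x1 x1B] : (0 < #|B|)%N by rewrite cB.
set O := [set u in A | t v u]; set I := [set u in A | t u v].
have tv : ~~ t v v by case: hT.
have cOI : (#|A| <= (#|O| + #|I|).+1)%N.
  rewrite (cardsD1 v A) vA add1n ltnS (leq_trans _ (leq_card_setU O I)) //.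
  apply: subset_leq_card; apply/subsetP => u; rewrite !inE => /andP[uv uA].
  rewrite uA /=; have := (proj2 hT) u v uv.
  by case: (t u v); case: (t v u).
have [OB|OS] := leqP (2 ^ b) #|O|.
  have [x0 x0B src] := @source_ex B x1 x1B.
  have cB' : #|B :\ x0| = b by move: cB; rewrite (cardsD1 x0 B) x0B => -[].
  have [g [ginj [gA gh]]] := IH _ _ cB' OB.
  exists (fun x => if x == x0 then v else g x); split; last split.
  - move=> x y xB yB /=.
    case: ifP => [/eqP ->|nx]; case: ifP => [/eqP ->|ny] //.
    + move=> vg; have := gA y; rewrite !inE ny yB => /(_ isT) /andP[_].
      by rewrite -vg (negbTE tv).
    + move=> gv; have := gA x; rewrite !inE nx xB => /(_ isT) /andP[_].
      by rewrite gv (negbTE tv).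
    + by apply: ginj; rewrite !inE ?nx ?ny ?xB ?yB.
  - move=> x xB; case: ifP => // nx.
    by have := gA x; rewrite !inE nx xB => /(_ isT) /andP[].
  - move=> x y xB yB hxy.
    case: ifP => [/eqP ex|nx]; case: ifP => [/eqP ey|ny].
    + by move: hxy; rewrite ex ey (negbTE (h_irr _)).
    + by have := gA y; rewrite !inE ny yB => /(_ isT) /andP[].
    + by move: (src x xB); rewrite -ey hxy.
    + by apply: gh; rewrite // !inE ?nx ?ny ?xB ?yB.
have IB : (2 ^ b <= #|I|)%N.
  move: cA; rewrite expnS => cA; lia.
have [x0 x0B src] := @sink_ex B x1 x1B.
have cB' : #|B :\ x0| = b by move: cB; rewrite (cardsD1 x0 B) x0B => -[].
have [g [ginj [gA gh]]] := IH _ _ cB' IB.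
exists (fun x => if x == x0 then v else g x); split; last split.
- move=> x y xB yB /=.
  case: ifP => [/eqP ->|nx]; case: ifP => [/eqP ->|ny] //.
  + move=> vg; have := gA y; rewrite !inE ny yB => /(_ isT) /andP[_].
    by rewrite -vg (negbTE tv).
  + move=> gv; have := gA x; rewrite !inE nx xB => /(_ isT) /andP[_].
    by rewrite gv (negbTE tv).
  + by apply: ginj; rewrite !inE ?nx ?ny ?xB ?yB.
- move=> x xB; case: ifP => // nx.
  by have := gA x; rewrite !inE nx xB => /(_ isT) /andP[].
- move=> x y xB yB hxy.
  case: ifP => [/eqP ex|nx]; case: ifP => [/eqP ey|ny].
  + by move: hxy; rewrite ex ey (negbTE (h_irr _)).
  + by move: (src y yB); rewrite -ex hxy.
  + by have := gA x; rewrite !inE nx xB => /(_ isT) /andP[].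
  + by apply: gh; rewrite // !inE ?nx ?ny ?xB ?yB.
Qed.
End S.

Local Open Scope ring_scope.
Theorem lemma14 (R : realType) (d : R) (hd : erdos_hanani_const d)
  (VH : finType) (h : rel VH) (hH : acyclic_digraph h)
  (k : nat) (hk : (0 < k)%N)
  (VT : finType) (t : rel VT) (hT : tournament t)
  (hsize : d * (2 ^ #|VH|)%:R * Num.sqrt (k%:R) <= #|VT|%:R) :
  exists f : 'I_k -> VH -> VT,
    (forall i, embeds h t (f i)) /\
    (forall i j, i != j -> arc_disjoint h (f i) (f j)).
Proof.
have [S [cS dS]] := hd _ _ (expn_gt0 2 #|VH|) hk _ hsize.
pose A i := [set enum_val x | x in S i].
have cA i : #|A i| = (2 ^ #|VH|)%N by rewrite card_imset ?cS //; exact: enum_val_inj.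
have memA i u : (u \in A i) = (enum_rank u \in S i).
  by rewrite -{1}(enum_rankK u) mem_imset //; exact: enum_val_inj.
have ex i : exists f : VH -> VT, {in [set: VH] &, injective f} /\
    (forall x, x \in [set: VH] -> f x \in A i) /\
    (forall x y, x \in [set: VH] -> y \in [set: VH] -> h x y -> t (f x) (f y)).
  by apply: (@embed_in VH h hH VT t hT #|VH| [set: VH] (A i) (cardsT VH)); rewrite cA.
have [f Hf] := fin_all_exists ex.
exists f; split.
  move=> i; have [fi [fA fh]] := Hf i; split.
    by move=> x y e; apply: fi; rewrite ?inE.
  by move=> x y hxy; apply: fh; rewrite ?inE.
move=> i j ij x y x' y' hxy hxy' [e1 e2].
have [fi [fA _]] := Hf i; have [fj [fA' _]] := Hf j.
have nxy : f i x != f i y.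
  apply/negP => /eqP /fi; rewrite !inE => /(_ isT isT) exy.
  by move: hxy; rewrite exy (negbTE (@h_irr VH h hH y)).
have inI u : u \in A i -> u \in A j -> enum_rank u \in S i :&: S j.
  by rewrite inE -!memA => -> ->.
have := dS _ _ ij.
have : (2 <= #|S i :&: S j|)%N.
  have <- : #|[set enum_rank (f i x); enum_rank (f i y)]| = 2%N.
    by rewrite cards2 (inj_eq enum_rank_inj) nxy.
  apply: subset_leq_card; apply/subsetP => u /set2P[] ->; apply: inI.
  - by rewrite fA ?inE.
  - by rewrite e1 fA' ?inE.
  - by rewrite fA ?inE.
  - by rewrite e2 fA' ?inE.
by move=> a b; move: (leq_trans a b).
Qed.
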